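(* Let $A$ be a real symmetric $n\times n$ matrix with smallest eigenvalue $\bar\lambda$, let $a,x_0,b_2,\dots,b_m\in\mathbb{R}^n$, $\alpha>0$, $\beta_2,\dots,\beta_m\in\mathbb{R}$, and define $f(x)=x^TAx+a^Tx$, $h_1(x)=\|x-x_0\|^2-\alpha$, $h_i(x)=b_i^Tx-\beta_i$ for $i=2,\dots,m$. Assume (H4) the system $Av-\bar\lambda v=0$, $b_i^Tv=0$ ($i=2,\dots,m$) has a nonzero solution $v\in\mathbb{R}^n$. Then the system $Av-\bar\lambda v=0$, $(a+2\bar\lambda x_0)^Tv\le 0$, $b_i^Tv\le 0$ ($i=2,\dots,m$) has a nonzero solution, and the set $\mathrm{U}(f,h_1,\dots,h_m)$ is convex.
   Context: $\mathrm{U}(f,h_1,\dots,h_m):=\{(f(x),h_1(x),\dots,h_m(x)) : x\in\mathbb{R}^n\}+\mathbb{R}^{m+1}_+\subset\mathbb{R}^{m+1}$. *)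

(* Defs.v *)
From HB Require Import structures.
From mathcomp Require Import all_boot all_order all_algebra.
From mathcomp Require Import reals.
Set Implicit Arguments. Unset Strict Implicit. Unset Printing Implicit Defensive.
Import Order.TTheory GRing.Theory Num.Theory.
Local Open Scope ring_scope.

Section Defs.
Variable R : realType.

Definition smallest_eigenvalue (n : nat) (A : 'M[R]_n) (lam : R) : Prop :=
  eigenvalue A lam /\ (forall mu : R, eigenvalue A mu -> lam <= mu).

Definition qobj (n : nat) (A : 'M[R]_n) (a x : 'cV[R]_n) : R :=
  (x^T *m A *m x) 0 0 + (a^T *m x) 0 0.

Definition ballcon (n : nat) (x0 : 'cV[R]_n) (alpha : R) (x : 'cV[R]_n) : R :=
  \sum_(j < n) ((x - x0) j 0) ^+ 2 - alpha.

Definition lincon (n : nat) (b : 'cV[R]_n) (beta : R) (x : 'cV[R]_n) : R :=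
  (b^T *m x) 0 0 - beta.

(* The vector (f(x), h_1(x), h_2(x), ..., h_m(x)) in R^{2+k}, k = m - 1;
   the linear constraints h_2..h_m are indexed by 'I_k. *)
Definition value_vec (n k : nat) (A : 'M[R]_n) (a x0 : 'cV[R]_n) (alpha : R)
  (b : 'I_k -> 'cV[R]_n) (beta : 'I_k -> R) (x : 'cV[R]_n) : 'rV[R]_(2 + k) :=
  \row_(i < 2 + k)
    match split i with
    | inl j => if (j : nat) == 0%N then qobj A a x else ballcon x0 alpha x
    | inr j => lincon (b j) (beta j) x
    end.

(* U(f, h_1, ..., h_m) = {(f(x), h_1(x), ..., h_m(x)) : x in R^n} + R^{m+1}_+ *)
Definition Uset (n k : nat) (A : 'M[R]_n) (a x0 : 'cV[R]_n) (alpha : R)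
  (b : 'I_k -> 'cV[R]_n) (beta : 'I_k -> R) (y : 'rV[R]_(2 + k)) : Prop :=
  exists x : 'cV[R]_n, forall i, value_vec A a x0 alpha b beta x 0 i <= y 0 i.

Definition convex_set (p : nat) (S : 'rV[R]_p -> Prop) : Prop :=
  forall y z, S y -> S z -> forall t : R, 0 <= t -> t <= 1 ->
    S (t *: y + (1 - t) *: z).

End Defs.

(* Main.v *)
Require Import Defs.
From HB Require Import structures.
From mathcomp Require Import all_boot all_order all_algebra.
From mathcomp Require Import reals.
From mathcomp Require Import ring lra.
From mathcomp Require Import boolp classical_sets topology normedtype derive.
Import Order.TTheory GRing.Theory Num.Theory.
Import numFieldNormedType.Exports.
Local Open Scope ring_scope.

Section PSD.
Variable R : realType.
Local Open Scope classical_set_scope.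

Lemma cont_sum (T : topologicalType) (I : Type) (s : seq I) (F : I -> T -> R) :
  (forall i, continuous (F i)) -> continuous (fun x => \sum_(i <- s) F i x).
Proof.
move=> cF; elim: s => [|i s IH].
  rewrite (_ : (fun _ => _) = fun=> 0); first exact: cst_continuous.
  by apply: funext => x; rewrite big_nil.
rewrite (_ : (fun _ => _) = fun x => F i x + \sum_(j <- s) F j x).
  move=> x; apply: (@continuousD _ R^o) => //. exact: (cF i x). exact: (IH x).
by apply: funext => x; rewrite big_cons.
Qed.


Variable n : nat.
Definition qf (A : 'M[R]_n) (x : 'rV[R]_n) := (x *m A *m x^T) 0 0.
Definition nrm (x : 'rV[R]_n) := \sum_i x 0 i ^+ 2.

Lemma qfE A x : qf A x = \sum_j \sum_i x 0 i * A i j * x 0 j.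
Proof.
rewrite /qf mxE; apply: eq_bigr => j _. rewrite mxE mulr_suml.
by apply: eq_bigr => i _; rewrite mxE.
Qed.

Lemma cont_coord i : continuous (fun x : 'rV[R]_n => x 0 i).
Proof. exact: (@coord_continuous R 1 n 0 i). Qed.

Lemma qf_cont A : continuous (qf A).
Proof.
rewrite (_ : qf A = fun x => \sum_j \sum_i x 0 i * A i j * x 0 j).
  apply: cont_sum => j; apply: cont_sum => i x.
  have c1 : continuous (fun y : 'rV[R]_n => y 0 i * A i j).
    by move=> y; apply: (continuousM (cont_coord i y) (@cst_continuous _ _ (A i j) y)).
  exact: (continuousM (c1 x) (cont_coord j x)).
by apply: funext => x; rewrite qfE.
Qed.

Lemma nrm_cont : continuous nrm.
Proof.
apply: cont_sum => i.
rewrite (_ : (fun _ => _) = fun x : 'rV[R]_n => x 0 i * x 0 i).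
  by move=> x; exact: (continuousM (cont_coord i x) (cont_coord i x)).
by apply: funext => x; rewrite expr2.
Qed.


Lemma nrm_ge0 (x : 'rV[R]_n) : 0 <= nrm x.
Proof. by apply: sumr_ge0 => i _; rewrite sqr_ge0. Qed.

Lemma coord_le_nrm (x : 'rV[R]_n) i : x 0 i ^+ 2 <= nrm x.
Proof. by rewrite /nrm (bigD1 i) //= lerDl sumr_ge0 // => j _; rewrite sqr_ge0. Qed.

Definition sph := [set x : 'rV[R]_n | nrm x = 1].

Lemma sph_compact : compact sph.
Proof.
apply: bounded_closed_compact.
  exists 1; split => // M M1 x Sx.
  change (mx_norm x <= M); rewrite mx_normrE; apply: (@big_ind _ (fun y => y <= M)).
  - lra.
  - by move=> y z yM zM; rewrite ge_max yM zM.
  move=> [i j] _ /=; rewrite ord1.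
  have := coord_le_nrm x j; rewrite Sx => h.
  have : `|x 0 j| ^+ 2 <= 1 by rewrite real_normK ?num_real.
  have := normr_ge0 (x 0 j); move: (`|x 0 j|) => r; nra.
have := @preimage_closed _ _ nrm [set x | x = 1]; apply.
  by move=> x _; apply: nrm_cont.
exact: closed_eq.
Qed.


Lemma quad_zero (B C : R) : (forall t, 0 <= t * B + t ^+ 2 * C) -> B = 0.
Proof.
move=> h; apply/eqP; apply: contraT => hB.
have hB2 : 0 < B ^+ 2 by rewrite lt_def sqr_ge0 sqrf_eq0 hB.
pose e := (`|C| + 1)^-1.
have ke : e * (`|C| + 1) = 1 by rewrite mulVf // gt_eqF // ltr_pwDr // normr_ge0.
have e0 : 0 < e by rewrite invr_gt0 ltr_pwDr // normr_ge0.
have := h (- (B * e)).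
have hC : C <= `|C| := ler_norm C.
have h1 : B ^+ 2 * e ^+ 2 * C <= B ^+ 2 * e ^+ 2 * `|C|.
  by rewrite ler_wpM2l // mulr_ge0 // ?sqr_ge0.
have h2 : B ^+ 2 * e ^+ 2 * `|C| = B ^+ 2 * e - B ^+ 2 * e ^+ 2.
  by rewrite -[X in X * e - _]mulr1 -ke; ring.
have h3 : 0 < B ^+ 2 * e ^+ 2 by rewrite mulr_gt0 // exprn_gt0.
move=> h4; suff : (0:R) < 0 by rewrite ltxx.
have e5 : - (B * e) * B + (- (B * e)) ^+ 2 * C = - (B ^+ 2 * e) + B ^+ 2 * e ^+ 2 * C by ring.
lra.
Qed.

Lemma addmx00 (M1 M2 : 'M[R]_1) : (M1 + M2) 0 0 = M1 0 0 + M2 0 0.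
Proof. by rewrite mxE. Qed.
Lemma submx00 (M1 M2 : 'M[R]_1) : (M1 - M2) 0 0 = M1 0 0 - M2 0 0.
Proof. by rewrite !mxE. Qed.
Lemma scalemx00 a (M1 : 'M[R]_1) : (a *: M1) 0 0 = a * M1 0 0.
Proof. by rewrite mxE. Qed.

Lemma qf_shift (P : 'M[R]_n) c y t : qf P (c + t *: y) =
  qf P c + t * ((c *m P *m y^T) 0 0 + (y *m P *m c^T) 0 0) + t ^+ 2 * qf P y.
Proof.
rewrite /qf linearD /= linearZ /= !mulmxDl !mulmxDr -!scalemxAl -!scalemxAr.
rewrite !addmx00 !scalemx00; ring.
Qed.

Lemma qf_scale (P : 'M[R]_n) t y : qf P (t *: y) = t ^+ 2 * qf P y.
Proof.
by rewrite /qf linearZ /= -!scalemxAl -!scalemxAr !scalemx00 mulrA -expr2.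
Qed.

Lemma nrm_qf x : nrm x = qf 1%:M x.
Proof.
rewrite /qf mulmx1 mxE; apply: eq_bigr => i _; rewrite !mxE expr2 //.
Qed.

Lemma nrm_eq0 x : nrm x = 0 -> x = 0.
Proof.
move=> /psumr_eq0P h; apply/matrixP => i j; rewrite ord1 mxE.
by apply/eqP; rewrite -sqrf_eq0; apply/eqP; apply: h => // k _; rewrite sqr_ge0.
Qed.


Lemma qf_tr (P : 'M[R]_n) (c y : 'rV[R]_n) :
  (c *m P *m y^T) 0 0 = (y *m P^T *m c^T) 0 0.
Proof.
have -> : (c *m P *m y^T) 0 0 = ((c *m P *m y^T)^T) 0 0 by rewrite [RHS]mxE.
by rewrite !trmx_mul trmxK mulmxA.
Qed.

Lemma min_eig (A : 'M[R]_n) : A^T = A -> (0 < n)%N ->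
  exists mu, eigenvalue A mu /\ forall x, mu * nrm x <= qf A x.
Proof.
move=> sA n0.
pose i0 := Ordinal n0.
have sne : sph !=set0.
  exists (delta_mx 0 i0); rewrite /sph /= /nrm (bigD1 i0) //= big1.
    by rewrite !mxE !eqxx expr1n addr0.
  by move=> j /negbTE hj; rewrite !mxE hj andbF expr0n.
have [c /set_mem Sc cmin] := compact_EVT_min sne sph_compact
   (@continuous_subspaceT _ _ sph _ (qf_cont A)).
pose mu : R := qf A c.
have bnd : forall x, mu * nrm x <= qf A x.
  move=> x; have [x0|xn0] := eqVneq (nrm x) 0.
    by rewrite x0 (nrm_eq0 _ x0) mulr0 /qf mul0mx mul0mx mxE.
  have xp : 0 < nrm x by rewrite lt_def xn0 nrm_ge0.
  pose s := Num.sqrt (nrm x).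
  have sp : 0 < s by rewrite sqrtr_gt0.
  have s2 : s ^+ 2 = nrm x by rewrite sqr_sqrtr // nrm_ge0.
  have Sy : sph (s^-1 *: x).
    by rewrite /sph /= nrm_qf qf_scale -nrm_qf exprVn s2 mulVf.
  have := cmin _ (mem_set Sy); rewrite qf_scale exprVn s2 -/mu => h.
  rewrite -(ler_pM2l xp) mulrA mulrV ?unitfE // mul1r in h.
  by rewrite mulrC.
exists mu; split => //.
have key : forall y : 'rV[R]_n, (y *m A *m c^T) 0 0 = mu * (y *m c^T) 0 0.
  move=> y; apply/eqP; rewrite -subr_eq0; apply/eqP.
  suff : 2 * ((y *m A *m c^T) 0 0 - mu * (y *m c^T) 0 0) = 0.
    by move/eqP; rewrite mulf_eq0 pnatr_eq0 /= => /eqP.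
  apply: (@quad_zero _ (qf A y - mu * nrm y)) => t.
  have := bnd (c + t *: y).
  rewrite nrm_qf !qf_shift -!nrm_qf Sc -/mu [(c *m A *m _) 0 0]qf_tr sA [(c *m 1%:M *m _) 0 0]qf_tr trmx1.
  rewrite !mulmx1.
  rewrite -subr_ge0.
  set a1 : R := (y *m A *m c^T) 0 0; set b1 : R := (y *m c^T) 0 0; set q1 : R := qf A y; set n1 : R := nrm y.
  have -> : mu + t * (a1 + a1) + t ^+ 2 * q1 - mu * (1 + t * (b1 + b1) + t ^+ 2 * n1)
     = t * (2 * (a1 - mu * b1)) + t ^+ 2 * (q1 - mu * n1).
    by clearbody a1 b1 q1 n1 mu; ring.
  done.
have h : nrm (c *m A - mu *: c) = 0.
  rewrite nrm_qf /qf mulmx1 linearB /= linearZ /= mulmxBr [(mu *: c)^T]linearZ /= -scalemxAr.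
  rewrite trmx_mul sA mulmxA submx00 key scalemx00 subrr //.
apply/eigenvalueP; exists c.
  by apply/eqP; rewrite -subr_eq0; apply/eqP; exact: nrm_eq0.
apply/eqP => c0; move: Sc; rewrite /sph /= c0 /nrm big1 => [|i _]; last by rewrite mxE expr0n.
by move/eqP; rewrite eq_sym oner_eq0.
Qed.


Lemma cq_shift (P : 'M[R]_n) (u v : 'cV[R]_n) s :
  ((u + s *: v)^T *m P *m (u + s *: v)) 0 0 =
  (u^T *m P *m u) 0 0 + s * ((u^T *m P *m v) 0 0 + (v^T *m P *m u) 0 0)
  + s ^+ 2 * (v^T *m P *m v) 0 0.
Proof.
rewrite [(u + s *: v)^T]linearD /= [(s *: v)^T]linearZ /= !mulmxDl !mulmxDr.
rewrite -!scalemxAl -!scalemxAr.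
rewrite !addmx00 !scalemx00; ring.
Qed.

Lemma lin_shift (c u v : 'cV[R]_n) s :
  (c^T *m (u + s *: v)) 0 0 = (c^T *m u) 0 0 + s * (c^T *m v) 0 0.
Proof. by rewrite mulmxDr -scalemxAr addmx00 scalemx00. Qed.

Lemma tr_scal (u v : 'cV[R]_n) : (u^T *m v) 0 0 = (v^T *m u) 0 0.
Proof.
have -> : (u^T *m v) 0 0 = ((u^T *m v)^T) 0 0 by rewrite [RHS]mxE.
by rewrite trmx_mul trmxK.
Qed.

End PSD.

Lemma ballconE (R : realType) n (x0 : 'cV[R]_n) alpha x :
  ballcon x0 alpha x = ((x - x0)^T *m (x - x0)) 0 0 - alpha.
Proof.
rewrite /ballcon mxE; congr (_ - _); apply: eq_bigr => i _.
by rewrite !mxE expr2.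
Qed.


Lemma final_arith (R : realType) (t lam fw Bf Cf Ch p av V X s : R) :
  0 <= t -> t <= 1 -> lam * Ch <= Cf -> 0 <= s -> s * (av + 2 * lam * X) <= 0 ->
  s * (2 * p - 2 * X) + s ^+ 2 * V = t * (1 - t) * Ch ->
  (fw + t * Bf + t ^+ 2 * Cf) + s * (2 * lam * p + av) + s ^+ 2 * (lam * V)
    <= t * (fw + Bf + Cf) + (1 - t) * fw.
Proof.
move=> t0 t1 hC s0 hcv hs.
rewrite -subr_ge0.
have -> : t * (fw + Bf + Cf) + (1 - t) * fw -
    (fw + t * Bf + t ^+ 2 * Cf + s * (2 * lam * p + av) + s ^+ 2 * (lam * V)) =
  t * (1 - t) * (Cf - lam * Ch) - s * (av + 2 * lam * X)
  - lam * (s * (2 * p - 2 * X) + s ^+ 2 * V - t * (1 - t) * Ch) by ring.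
rewrite hs subrr mulr0 subr0.
have : 0 <= t * (1 - t) * (Cf - lam * Ch).
  by apply: mulr_ge0; [apply: mulr_ge0 => //; lra | lra].
lra.
Qed.

Lemma ball_arith (R : realType) (t hw Bh Ch p X V s : R) :
  s * (2 * p - 2 * X) + s ^+ 2 * V = t * (1 - t) * Ch ->
  (hw + t * Bh + t ^+ 2 * Ch) + s * (2 * p - 2 * X) + s ^+ 2 * V
   = t * (hw + Bh + Ch) + (1 - t) * hw.
Proof. by move=> hs; rewrite -addrA hs; ring. Qed.

Lemma root_arith (R : realType) (P V D : R) : 0 < V -> 0 <= D ->
  exists s, 0 <= s /\ s * P + s ^+ 2 * V = D.
Proof.
move=> V0 D0.
have h0 : 0 <= P ^+ 2 + 4 * V * D.
  by apply: addr_ge0; [exact: sqr_ge0 | apply: mulr_ge0 => //; apply: mulr_ge0 => //; lra].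
pose r := Num.sqrt (P ^+ 2 + 4 * V * D).
have r2 : r ^+ 2 = P ^+ 2 + 4 * V * D by rewrite sqr_sqrtr.
have rP : P <= r.
  apply: le_trans (ler_norm P) _; rewrite -sqrtr_sqr; apply: ler_wsqrtr.
  rewrite lerDl; apply: mulr_ge0 => //; apply: mulr_ge0 => //; lra.
exists ((r - P) / (2 * V)); split.
  by apply: divr_ge0; lra.
have Vn0 : V != 0 by rewrite gt_eqF.
have -> : (r - P) / (2 * V) * P + ((r - P) / (2 * V)) ^+ 2 * V = (r ^+ 2 - P ^+ 2) / (4 * V).
  by field.
by rewrite r2; field.
Qed.

Theorem proposition3p3 (R : realType) (n k : nat) (A : 'M[R]_n) (lam : R)
  (a x0 : 'cV[R]_n) (alpha : R) (b : 'I_k -> 'cV[R]_n) (beta : 'I_k -> R) :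
  A^T = A ->
  smallest_eigenvalue A lam ->
  0 < alpha ->
  (exists v : 'cV[R]_n, v != 0 /\ A *m v - lam *: v = 0 /\
     (forall i : 'I_k, (b i)^T *m v = 0)) ->
  (exists v : 'cV[R]_n, v != 0 /\ A *m v - lam *: v = 0 /\
     ((a + (2 * lam) *: x0)^T *m v) 0 0 <= 0 /\
     (forall i : 'I_k, ((b i)^T *m v) 0 0 <= 0)) /\
  convex_set (Uset A a x0 alpha b beta).
Proof.
move=> sA [eigL lmin] alpha0 [v [vnz [Av bv]]].
have n0 : (0 < n)%N.
  rewrite lt0n; apply/eqP => n0; move/negP: vnz; apply; apply/eqP/matrixP => i j.
  by move: (ltn_ord i); rewrite {2}n0.
have Avl : A *m v = lam *: v by apply/eqP; rewrite -subr_eq0 Av.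
have psd : forall d : 'cV[R]_n, lam * (d^T *m d) 0 0 <= (d^T *m A *m d) 0 0.
  move=> d; have [mu [emu hmu]] := @min_eig R n A sA n0.
  have := hmu (d^T); rewrite (@nrm_qf R n) /qf trmxK mulmx1 => h.
  apply: le_trans h; apply: ler_wpM2r; last exact: lmin.
  by have := @nrm_ge0 R n (d^T); rewrite (@nrm_qf R n) /qf trmxK mulmx1.
pose cc := a + (2 * lam) *: x0.
have [v' [v'nz [Av' [bv' cv']]]] : exists v' : 'cV[R]_n, v' != 0 /\ A *m v' = lam *: v' /\
    (forall i, (b i)^T *m v' = 0) /\ (cc^T *m v') 0 0 <= 0.
  have [cvle|cvgt] := lerP ((cc^T *m v) 0 0) 0; first by exists v.
  exists (- v); split; first by rewrite oppr_eq0.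
  split; first by rewrite mulmxN Avl scalerN.
  split; first by move=> i; rewrite mulmxN bv oppr0.
  by rewrite mulmxN mxE oppr_le0 ltW.
split.
  exists v'; split => //; split; first by rewrite Av' subrr.
  by split => // i; rewrite bv' mxE.
clear v vnz Av bv Avl.
move=> y z [x hx] [w hw] t t0 t1.
pose d := x - w.
pose u0 := w + t *: d.
have ex : x = w + 1 *: d by rewrite scale1r /d addrC subrK.
have sq_shift : forall (u e : 'cV[R]_n) s, ((u + s *: e)^T *m (u + s *: e)) 0 0 =
    (u^T *m u) 0 0 + s * ((u^T *m e) 0 0 + (e^T *m u) 0 0) + s ^+ 2 * (e^T *m e) 0 0.
  by move=> u e s; have := @cq_shift R n 1%:M u e s; rewrite !mulmx1.
have qsh : forall s, qobj A a (w + s *: d) = qobj A a w +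
    s * ((w^T *m A *m d) 0 0 + (d^T *m A *m w) 0 0 + (a^T *m d) 0 0)
    + s ^+ 2 * (d^T *m A *m d) 0 0.
  by move=> s; rewrite /qobj cq_shift lin_shift; ring.
have bsh : forall s, ballcon x0 alpha (w + s *: d) = ballcon x0 alpha w +
    s * (((w - x0)^T *m d) 0 0 + (d^T *m (w - x0)) 0 0) + s ^+ 2 * (d^T *m d) 0 0.
  by move=> s; rewrite !ballconE addrAC sq_shift; ring.
have lsh : forall i s, lincon (b i) (beta i) (w + s *: d) = lincon (b i) (beta i) w +
    s * ((b i)^T *m d) 0 0.
  by move=> i s; rewrite /lincon lin_shift; ring.
pose V : R := (v'^T *m v') 0 0.
have V0 : 0 < V.
  have := @nrm_ge0 R n (v'^T); rewrite (@nrm_qf R n) /qf trmxK mulmx1 -/V.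
  rewrite le_eqVlt => /orP[/eqP V0|//]; exfalso; move/negP: v'nz; apply.
  apply/eqP; rewrite -[v']trmxK; apply/eqP; rewrite -[X in _ == X]trmx0.
  by apply/eqP; congr trmx; apply: (@nrm_eq0 R n); rewrite (@nrm_qf R n) /qf trmxK mulmx1.
pose Ch : R := (d^T *m d) 0 0.
have Ch0 : 0 <= Ch by have := @nrm_ge0 R n (d^T); rewrite (@nrm_qf R n) /qf trmxK mulmx1.
pose p : R := (u0^T *m v') 0 0.
pose X : R := (x0^T *m v') 0 0.
pose av : R := (a^T *m v') 0 0.
have t1' : 0 <= 1 - t by lra.
have [s [s0 hs]] := @root_arith R (2 * p - 2 * X) V (t * (1 - t) * Ch) V0
  (mulr_ge0 (mulr_ge0 t0 t1') Ch0).
pose u := u0 + s *: v'.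
have qv : qobj A a u = qobj A a u0 + s * (2 * lam * p + av) + s ^+ 2 * (lam * V).
  rewrite /qobj /u cq_shift lin_shift -!mulmxA Av' -!scalemxAr !scalemx00.
  have -> : (v'^T *m (A *m u0)) 0 0 = lam * p.
    by rewrite mulmxA -{1}sA -trmx_mul Av' linearZ /= -scalemxAl scalemx00 tr_scal.
  rewrite -/p -/V -/av; ring.
have bv2 : ballcon x0 alpha u = ballcon x0 alpha u0 + s * (2 * p - 2 * X) + s ^+ 2 * V.
  rewrite !ballconE /u addrAC sq_shift -/V.
  rewrite [(u0 - x0)^T]linearB /= mulmxBl submx00 [(v'^T *m (u0 - x0))]mulmxBr submx00.
  rewrite [(v'^T *m u0) 0 0]tr_scal [(v'^T *m x0) 0 0]tr_scal [((u0^T - x0^T) *m v')]mulmxBl submx00 -/p -/X; ring.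
have lv : forall i, lincon (b i) (beta i) u = lincon (b i) (beta i) u0.
  by move=> i; rewrite /lincon /u lin_shift bv' [X in s * X]mxE mulr0 addr0.
have cvE : (cc^T *m v') 0 0 = av + 2 * lam * X.
  rewrite /cc [(a + _)^T]linearD /= [((2 * lam) *: x0)^T]linearZ /= mulmxDl -scalemxAl.
  by rewrite addmx00 scalemx00 -/av -/X.
have Fq : qobj A a u <= t * qobj A a x + (1 - t) * qobj A a w.
  rewrite qv /u0 qsh ex qsh expr1n !mul1r.
  apply: (@final_arith R t lam _ _ _ Ch p av V X s) => //.
    exact: psd.
  by rewrite -cvE mulr_ge0_le0.
have Fh : ballcon x0 alpha u <= t * ballcon x0 alpha x + (1 - t) * ballcon x0 alpha w.
  by rewrite bv2 /u0 bsh ex bsh expr1n !mul1r ball_arith.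
have Fl : forall i, lincon (b i) (beta i) u <=
    t * lincon (b i) (beta i) x + (1 - t) * lincon (b i) (beta i) w.
  by move=> i; rewrite lv /u0 lsh ex lsh mul1r; rewrite le_eqVlt; apply/orP; left; apply/eqP; ring.
exists u => i.
move: (hx i) (hw i); rewrite !mxE.
have comb : forall (e ex ew ey ez : R), e <= t * ex + (1 - t) * ew -> ex <= ey -> ew <= ez ->
    e <= t * ey + (1 - t) * ez.
  move=> e ex' ew ey ez h1 h2 h3; apply: le_trans h1 _; apply: lerD; exact: ler_wpM2l.
case: (split i) => [j|j].
  case: ifP => _; [exact: comb | exact: comb].
exact: comb.
Qed.
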